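(* Let $R$ be a finite chain ring with maximal ideal $\mathfrak{m}$ and residue field $\mathbb{F}_q$, and let $\pi:R\to\mathbb{F}_q$ be the natural projection. Let $\lambda_1,\lambda_2$ be units of $R$ with $\pi(\lambda_1)\neq\pi(\lambda_2)$. For $i=1,2$, let $C_i$ be a free $\lambda_i$-constacyclic code over $R$ of length $n$, and suppose $C_1\cap C_2$ is both $\lambda_1$-constacyclic and $\lambda_2$-constacyclic. Then $C_1\cap C_2=R^n$ or $C_1\cap C_2=\{\mathbf{0}\}$.
   Context: A finite chain ring is a finite commutative local ring whose ideals form a chain. A linear code $C\subseteq R^n$ (an $R$-submodule) is $\lambda$-constacyclic if $(\lambda c_{n-1},c_0,\dots,c_{n-2})\in C$ whenever $(c_0,\dots,c_{n-1})\in C$; free means free as an $R$-module. $\pi(r)=r+\mathfrak{m}$. *)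

(* Defs.v *)
From HB Require Import structures.
From mathcomp Require Import all_boot all_order all_algebra.
Set Implicit Arguments. Unset Strict Implicit. Unset Printing Implicit Defensive.
Import GRing.Theory.
Local Open Scope ring_scope.

Definition is_ideal (R : finComUnitRingType) (I : {set R}) : Prop :=
  [/\ (0 : R) \in I,
      (forall x y, x \in I -> y \in I -> x + y \in I) &
      (forall r x, x \in I -> r * x \in I)].

Definition ideals_chain (R : finComUnitRingType) : Prop :=
  forall I J : {set R}, is_ideal I -> is_ideal J -> (I \subset J) || (J \subset I).

Definition unique_maximal_ideal (R : finComUnitRingType) (m : {set R}) : Prop :=
  [/\ is_ideal m, m != setT &
      forall I : {set R}, is_ideal I -> I != setT -> I \subset m].

Definition linear_code (R : finComUnitRingType) n (C : {set 'rV[R]_n}) : Prop :=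
  [/\ (0 : 'rV[R]_n) \in C,
      (forall x y, x \in C -> y \in C -> x + y \in C) &
      (forall (r : R) x, x \in C -> r *: x \in C)].

Definition free_code (R : finComUnitRingType) n (C : {set 'rV[R]_n}) : Prop :=
  exists k (B : 'M[R]_(k, n)),
    (forall x, (x \in C) <-> exists u : 'rV[R]_k, x = u *m B) /\
    (forall u : 'rV[R]_k, u *m B = 0 -> u = 0).

(* lambda-constacyclic shift: (c_0,...,c_{n-1}) |-> (lambda c_{n-1}, c_0, ..., c_{n-2}). *)
Definition cshift (R : finComUnitRingType) n (lam : R) (c : 'rV[R]_n) : 'rV[R]_n :=
  \row_(i < n) ((if nat_of_ord i == 0%N then lam else 1) * c 0 (ord_pred i)).

Definition constacyclic (R : finComUnitRingType) n (lam : R) (C : {set 'rV[R]_n}) : Prop :=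
  forall c, c \in C -> cshift lam c \in C.

(* Main.v *)
Require Import Defs.
From HB Require Import structures.
From mathcomp Require Import all_boot all_order all_algebra zify.
Set Implicit Arguments. Unset Strict Implicit. Unset Printing Implicit Defensive.
Import GRing.Theory.
Local Open Scope ring_scope.

Section Aux.
Variable R : finComUnitRingType.
Variable m : {set R}.
Hypothesis Hm : unique_maximal_ideal m.

Definition prin (z : R) : {set R} := [set z * r | r in [set: R]].

Lemma prin_ideal z : is_ideal (prin z).
Proof.
split.
- by apply/imsetP; exists 0; rewrite ?inE ?mulr0.
- move=> x y /imsetP[r _ ->] /imsetP[s _ ->]; apply/imsetP; exists (r + s) => //.
  by rewrite mulrDr.
- move=> r' x /imsetP[r _ ->]; apply/imsetP; exists (r' * r) => //.
  by rewrite mulrA [r' * z]mulrC -mulrA.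
Qed.

Lemma one_notin_m : (1 : R) \notin m.
Proof.
case: Hm => [[_ _ Hmul] Hne _]; apply/negP => H1; move/negP: Hne; apply.
by apply/eqP/setP => r; rewrite inE -[r]mulr1 Hmul.
Qed.

Lemma notin_m_unit x : x \notin m -> x \is a GRing.unit.
Proof.
move=> Hx; apply/negPn/negP => Hu; move/negP: Hx; apply.
case: Hm => _ _ Hmax.
have : prin x \subset m.
  apply: Hmax; first exact: prin_ideal.
  apply/negP => /eqP HT.
  have : (1 : R) \in prin x by rewrite HT inE.
  case/imsetP => r _ Hr; move/negP: Hu; apply; apply/unitrPr; exists r; by rewrite -Hr.
move/subsetP; apply; apply/imsetP; exists 1; by rewrite ?inE ?mulr1.
Qed.

Lemma unit_1sub x r : x \in m -> (1 - x * r) \is a GRing.unit.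
Proof.
move=> Hx; apply: notin_m_unit; apply/negP => H.
case: Hm => [[_ Hadd Hmul] _ _].
have : (1 - x * r) + x * r \in m by apply: Hadd => //; rewrite mulrC Hmul.
by rewrite subrK (negbTE one_notin_m).
Qed.

Definition soc : {set R} := [set z | [forall x in m, z * x == 0]].

Lemma soc_nonzero : exists z, (z \in soc) && (z != 0).
Proof.
have H10 : (1 : R) != 0 := oner_neq0 R.
pose z := [arg min_(z < (1 : R) | z != 0) #|prin z|].
case: (@arg_minnP _ (1 : R) (fun z => z != 0) (fun z => #|prin z|) H10).
move=> z0 Hz0 Hmin.
exists z0; rewrite Hz0 andbT inE; apply/forall_inP => x Hx; apply/negPn/negP => Hzx.
have Hsub : prin (z0 * x) \subset prin z0.
  apply/subsetP => y /imsetP[r _ ->]; apply/imsetP; exists (x * r) => //; by rewrite mulrA.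
have Heq : prin (z0 * x) = prin z0.
  apply/eqP; rewrite eqEcard Hsub /=; exact: Hmin.
have : z0 \in prin (z0 * x) by rewrite Heq; apply/imsetP; exists 1; rewrite ?inE ?mulr1.
case/imsetP => r _ Hr.
have : z0 * (1 - x * r) = 0 by rewrite mulrBr mulr1 mulrA -Hr subrr.
move/(congr1 (fun y => y * (1 - x * r)^-1)).
rewrite mul0r -mulrA mulrV ?mulr1; last exact: unit_1sub.
by move/eqP; rewrite (negbTE Hz0).
Qed.


Lemma card_ge2 (S : {set R}) z : z \in S -> z != 0 -> (0:R) \in S -> (1 < #|S|)%N.
Proof.
move=> Hz Hz0 H0; rewrite (cardD1 0) (cardD1 z) !inE Hz Hz0 H0 /=.
by [].

Qed.

Definition Sv k (S : {set R}) : {set 'rV[R]_k} := [set u : 'rV[R]_k | [forall i, u 0 i \in S]].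

Lemma card_Sv k S : #|Sv k S| = (#|S| ^ k)%N.
Proof.
have -> : Sv k S = [set (\row_i f i : 'rV[R]_k) | f : {ffun 'I_k -> R} in ffun_on S].
  apply/setP => u; rewrite inE; apply/forallP/imsetP.
  - move=> H; exists [ffun i => u 0 i].
      by apply/ffun_onP => i; rewrite ffunE.
    by apply/rowP => i; rewrite !mxE ffunE.
  - by case=> f /ffun_onP Hf -> i; rewrite mxE.
rewrite card_in_imset ?card_ffun_on ?card_ord //.
move=> f g _ _ /rowP H; apply/ffunP => i; move: (H i); by rewrite !mxE.
Qed.

Lemma mulmx_inj k n (B : 'M[R]_(k, n)) :
  (forall u : 'rV[R]_k, u *m B = 0 -> u = 0) -> injective (fun u : 'rV[R]_k => u *m B).
Proof.
move=> Hinj u v /= H; apply/eqP; rewrite -subr_eq0; apply/eqP; apply: Hinj.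
by rewrite mulmxBl H subrr.
Qed.

Lemma free_full n (C : {set 'rV[R]_n}) : free_code C ->
  (forall v, v \in Sv n soc -> v \in C) -> C = setT.
Proof.
case=> k [B [HC Hinj]] Hsoc.
have Hsurj : Sv n soc = (fun u => u *m B) @: Sv k soc.
  apply/setP => v; apply/idP/imsetP.
  - move=> Hv; case: (proj1 (HC v) (Hsoc v Hv)) => u Hu; exists u => //.
    rewrite inE; apply/forallP => i; rewrite inE; apply/forall_inP => x Hx.
    have Hx0 : (x *: u) *m B = 0.
      rewrite -scalemxAl -Hu; apply/rowP => j; rewrite !mxE mulrC.
      move: Hv; rewrite inE => /forallP /(_ j); rewrite inE => /forall_inP /(_ x Hx) /eqP.
      by [].
    move: (Hinj _ Hx0) => /rowP /(_ i); rewrite !mxE mulrC => ->.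
    by [].
  - case=> u Hu ->; rewrite inE; apply/forallP => j; rewrite inE.
    apply/forall_inP => x Hx; rewrite !mxE big_distrl /=; apply/eqP; apply: big1 => i _.
    move: Hu; rewrite inE => /forallP /(_ i); rewrite inE => /forall_inP /(_ x Hx) /eqP.
    by rewrite mulrAC => ->; rewrite mul0r.
have Hcard : (#|soc| ^ n = #|soc| ^ k)%N.
  by rewrite -!card_Sv Hsurj card_in_imset //; move=> u v _ _; apply: mulmx_inj.
have Hs2 : (1 < #|soc|)%N.
  case: (soc_nonzero) => z /andP[Hz Hz0].
  have H0 : (0 : R) \in soc by rewrite inE; apply/forall_inP => x _; rewrite mul0r.
  exact: card_ge2 Hz Hz0 H0.
have Hkn : k = n by apply/eqP; rewrite -(eqn_exp2l _ _ Hs2) Hcard.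
subst k.
apply/eqP; rewrite eqEcard subsetT /=.
rewrite -(card_in_imset (f := fun u => u *m B) (D := [set: 'rV[R]_n])); last first.
  by move=> u v _ _; apply: mulmx_inj.
apply: subset_leq_card; apply/subsetP => v /imsetP[u _ ->].
by apply/HC; exists u.
Qed.

End Aux.
Section Shift.
Variable R : finComUnitRingType.
Variable n : nat.

Definition evec (a : R) (t : nat) : 'rV[R]_n := \row_(i < n) (if nat_of_ord i == t then a else 0).

Lemma ord_pred_val (i : 'I_n) :
  nat_of_ord (ord_pred i) = if nat_of_ord i == 0%N then n.-1 else (nat_of_ord i).-1.
Proof.
rewrite /ord_pred /=; case: i => [[|k] Hk] /=.
  by rewrite add0n modn_small // prednK // (leq_ltn_trans _ Hk).
by rewrite modnDr modn_small // ltnW.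
Qed.

Lemma shift_diff (l1 l2 : R) (c : 'rV[R]_n) (j : 'I_n) : nat_of_ord j = n.-1 ->
  cshift l1 c - cshift l2 c = evec ((l1 - l2) * c 0 j) 0.
Proof.
move=> Hj; apply/rowP => i; rewrite !mxE.
case: (eqVneq (nat_of_ord i) 0%N) => Hi.
  have -> : ord_pred i = j by apply: val_inj; move: (ord_pred_val i); rewrite Hi eqxx -Hj.
  by rewrite mulrBl.
by rewrite !mul1r subrr.
Qed.

Lemma iter_shift (lam : R) (c : 'rV[R]_n) t (i j : 'I_n) : (t <= i)%N -> nat_of_ord j = (i - t)%N ->
  (iter t (cshift lam) c) 0 i = c 0 j.
Proof.
elim: t i j => [|t IH] i j Hti Hj.
  by rewrite /=; congr (c 0 _); apply: val_inj; rewrite /= Hj subn0.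
rewrite iterS /cshift mxE.
have Hi0 : (nat_of_ord i == 0%N) = false by case: (nat_of_ord i) Hti.
rewrite Hi0 mul1r; apply: IH.
  by rewrite ord_pred_val Hi0 -subn1 leq_subRL ?add1n // (leq_ltn_trans _ Hti).
by rewrite ord_pred_val Hi0 Hj subnS -subn1 subnAC subn1.
Qed.

Lemma iter_evec (lam a : R) t : (t < n)%N -> iter t (cshift lam) (evec a 0) = evec a t.
Proof.
elim: t => [//|t IH] Ht.
rewrite iterS IH ?(ltnW Ht) //; apply/rowP => i; rewrite !mxE.
case: (eqVneq (nat_of_ord i) 0%N) => Hi.
  rewrite ord_pred_val Hi eqxx /=.
  have -> : (n.-1 == t) = false.
    by apply/negbTE/eqP; lia.
  by rewrite mulr0.
rewrite mul1r ord_pred_val (negbTE Hi).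
by case: (nat_of_ord i) Hi => [|k] //= _; rewrite eqSS.
Qed.

Lemma scale_evec s a t : s *: evec a t = evec (s * a) t.
Proof. by apply/rowP => i; rewrite !mxE; case: ifP; rewrite ?mulr0. Qed.

Lemma add_evec a b t : evec a t + evec b t = evec (a + b) t.
Proof. by apply/rowP => i; rewrite !mxE; case: ifP; rewrite ?addr0. Qed.


Lemma linear_codeI (C1 C2 : {set 'rV[R]_n}) :
  linear_code C1 -> linear_code C2 -> linear_code (C1 :&: C2).
Proof.
case=> [a1 b1 c1] [a2 b2 c2]; split; first by rewrite inE a1 a2.
- move=> x y; rewrite !inE => /andP[? ?] /andP[? ?]; by rewrite b1 ?b2.
- move=> r x; rewrite !inE => /andP[? ?]; by rewrite c1 ?c2.
Qed.

Lemma iter_in (lam : R) (D : {set 'rV[R]_n}) c t :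
  constacyclic lam D -> c \in D -> iter t (cshift lam) c \in D.
Proof. by move=> HD Hc; elim: t => [//|t IH]; rewrite iterS; apply: HD. Qed.

End Shift.

Theorem proposition4p5 (R : finComUnitRingType) (m : {set R}) (n : nat)
  (lam1 lam2 : R) (C1 C2 : {set 'rV[R]_n}) :
  ideals_chain R -> unique_maximal_ideal m ->
  lam1 \is a GRing.unit -> lam2 \is a GRing.unit ->
  lam1 - lam2 \notin m ->
  linear_code C1 -> free_code C1 -> constacyclic lam1 C1 ->
  linear_code C2 -> free_code C2 -> constacyclic lam2 C2 ->
  constacyclic lam1 (C1 :&: C2) -> constacyclic lam2 (C1 :&: C2) ->
  C1 :&: C2 = setT \/ C1 :&: C2 = [set 0].
Proof.
move=> Hchain Hm _ _ Hdiff HL1 HF1 _ HL2 HF2 _ HD1 HD2.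
set D := C1 :&: C2.
have HLD : linear_code D by exact: linear_codeI.
case: HLD => [D0 Dadd Dscale].
have [Hex|Hnex] := boolP [exists c, (c \in D) && (c != 0)]; last first.
  right; apply/setP => c; rewrite in_set1; apply/idP/eqP => [Hc|->//].
  apply/eqP; move/existsPn: Hnex => /(_ c); by rewrite Hc /= negbK.
left.
case/existsP: Hex => c /andP[Hc Hc0].
have [j Hj] : exists j, c 0 j != 0.
  case: (boolP [exists j, c 0 j != 0]) => [/existsP//|/existsPn H]; move/negP: Hc0; case.
  by apply/eqP/rowP => i; rewrite mxE; move: (H i); rewrite negbK => /eqP.
have Hn : (0 < n)%N by case: j {Hj} => k Hk; apply: leq_ltn_trans Hk.
have Hjl : (n.-1 < n)%N by rewrite ltn_predL.
pose jl : 'I_n := Ordinal Hjl.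
have Hu : (lam1 - lam2) \is a GRing.unit by apply: (@notin_m_unit R m Hm).
have Hstep : forall d r, d \in D -> evec n (r * d 0 jl) 0 \in D.
  move=> d r Hd.
  have H1 : cshift lam1 d - cshift lam2 d \in D.
    by apply: Dadd; [apply: HD1 | rewrite -scaleN1r; apply: Dscale; apply: HD2].
  rewrite (shift_diff _ _ _ (j := jl)) // in H1.
  move: (Dscale (r * (lam1 - lam2)^-1) _ H1); rewrite scale_evec.
  by rewrite mulrA -(mulrA r) mulVr ?mulr1.
have Hall : forall (i : 'I_n) (j' : 'I_n) r, evec n (r * c 0 j') i \in D.
  move=> i j' r.
  rewrite -(iter_evec lam1) //; apply: iter_in HD1 _.
  have -> : c 0 j' = (iter (n.-1 - j') (cshift lam2) c) 0 jl.
    rewrite (iter_shift _ _ (j := j')) //=.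
      by rewrite leq_subLR leq_addl.
    by rewrite subKn // -ltnS prednK.
  by apply: Hstep; apply: iter_in.
pose I := [set x : R | [forall i : 'I_n, evec n x i \in D]].
have HI : is_ideal I.
  split.
  - rewrite inE; apply/forallP => i.
    have -> : evec n (0 : R) i = 0 by apply/rowP => l; rewrite !mxE; case: ifP.
    exact: D0.
  - move=> x y; rewrite !inE => /forallP Hx /forallP Hy; apply/forallP => i.
    by rewrite -add_evec; apply: Dadd.
  - move=> r x; rewrite !inE => /forallP Hx; apply/forallP => i.
    by rewrite -scale_evec; apply: Dscale.
have HcI : c 0 j \in I by rewrite inE; apply/forallP => i; rewrite -[c 0 j]mul1r.
have HsocI : forall z, z \in soc m -> z \in I.
  move=> z Hz.
  case/orP: (Hchain _ _ (prin_ideal z) HI) => /subsetP Hs.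
    by apply: Hs; apply/imsetP; exists 1; rewrite ?inE ?mulr1.
  case/imsetP: (Hs _ HcI) => r _ Hr.
  have Hrm : r \notin m.
    apply/negP => Hrm; move: Hz; rewrite inE => /forall_inP /(_ r Hrm) /eqP Hzr.
    by move/negP: Hj; apply; rewrite Hr Hzr.
  have Hru := notin_m_unit Hm Hrm.
  have -> : z = r^-1 * c 0 j by rewrite Hr mulrC -mulrA mulrV ?mulr1.
  by case: HI => _ _; apply.
have HSv : forall v, v \in Sv n (soc m) -> v \in D.
  move=> v Hv.
  have -> : v = \sum_(i < n) evec n (v 0 i) i.
    apply/rowP => l; rewrite summxE (bigD1 l) //= big1 ?mxE ?eqxx ?addr0 //.
    move=> i Hil; rewrite mxE; case: eqP => // Hli; case/negP: Hil.
    by apply/eqP/val_inj.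
  apply: (big_ind (fun x => x \in D)) => //.
  move=> i _; move: Hv; rewrite inE => /forallP /(_ i) /HsocI.
  by rewrite inE => /forallP.
have E1 : C1 = setT.
  apply: (free_full Hm HF1) => v /HSv; rewrite inE => /andP[].
  by [].
have E2 : C2 = setT.
  apply: (free_full Hm HF2) => v /HSv; rewrite inE => /andP[].
  by [].
by rewrite /D E1 E2 setIid.
Qed.
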